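(* The polynomial algebra $P_n=K[x_1,\dots,x_n]$, with its natural $\mathbb{S}_n$-module structure, is up to isomorphism the only faithful simple $\mathbb{S}_n$-module. Consequently, the Jacobson radical of $\mathbb{S}_n$ is zero and $\mathbb{S}_n$ is a primitive algebra.
   Context: $K$ is a field. $\mathbb{S}_n$ is the $K$-algebra generated by $x_1,\dots,x_n,y_1,\dots,y_n$ subject to the defining relations $y_ix_i=1$ for all $i$, and $[x_i,y_j]=[x_i,x_j]=[y_i,y_j]=0$ for all $i\ne j$. The natural $\mathbb{S}_n$-module structure on $P_n$ is as follows: $x_i$ acts by multiplication; for a monomial $x^\alpha=x_1^{\alpha_1}\cdots x_n^{\alpha_n}$, $y_i$ sends $x^\alpha$ to $x^{\alpha}/x_i$ if $\alpha_i\ge1$ and to $0$ if $\alpha_i=0$. *)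

(* Defs.v *)
From HB Require Import structures.
From mathcomp Require Import all_boot all_order all_algebra.
Set Implicit Arguments. Unset Strict Implicit. Unset Printing Implicit Defensive.
Import GRing.Theory.
Local Open Scope ring_scope.

(* The polynomial algebra P_n = K[x_0,...,x_{n-1}], realised as       *)
(* iterated univariate polynomials: P_0 = K, P_{m+1} = P_m[x_m].      *)

Fixpoint mpolyR (K : comNzRingType) (n : nat) : comNzRingType :=
  if n is n'.+1 then ({poly mpolyR K n'} : comNzRingType) else K.

Fixpoint iconst (K : comNzRingType) (n : nat) (k : K) : mpolyR K n :=
  match n return mpolyR K n with
  | 0 => k
  | n'.+1 => ((@iconst K n' k)%:P : {poly mpolyR K n'})
  end.

Lemma iconstM (K : comNzRingType) n (a b : K) :
  iconst n (a * b) = iconst n a * iconst n b.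
Proof. by elim: n => [|n IH] //=; rewrite IH polyCM. Qed.

Lemma iconstD (K : comNzRingType) n (a b : K) :
  iconst n (a + b) = iconst n a + iconst n b.
Proof. by elim: n => [|n IH] //=; rewrite IH polyCD. Qed.

Lemma iconst1 (K : comNzRingType) n : iconst n (1 : K) = 1.
Proof. by elim: n => [|n IH] //=; rewrite IH. Qed.

Definition Pn (K : comNzRingType) (n : nat) : Type := mpolyR K n.
HB.instance Definition _ (K : comNzRingType) n :=
  GRing.ComNzRing.copy (Pn K n) (mpolyR K n).

Section PnLmod.
Variables (K : comNzRingType) (n : nat).
Definition Pn_scale (k : K) (p : Pn K n) : Pn K n := (iconst n k : Pn K n) * p.
Lemma Pn_scalerA a b v : Pn_scale a (Pn_scale b v) = Pn_scale (a * b) v.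
Proof. by rewrite /Pn_scale iconstM mulrA. Qed.
Lemma Pn_scale1r : left_id 1 Pn_scale.
Proof. by move=> v; rewrite /Pn_scale iconst1 mul1r. Qed.
Lemma Pn_scalerDr : right_distributive Pn_scale +%R.
Proof. by move=> a u v; rewrite /Pn_scale mulrDr. Qed.
Lemma Pn_scalerDl v : {morph Pn_scale^~ v : a b / a + b}.
Proof. by move=> a b; rewrite /Pn_scale iconstD mulrDl. Qed.
HB.instance Definition _ := GRing.Zmodule_isLmodule.Build K (Pn K n)
  Pn_scalerA Pn_scale1r Pn_scalerDr Pn_scalerDl.
End PnLmod.

Fixpoint xact (K : comNzRingType) (n : nat) : nat -> mpolyR K n -> mpolyR K n :=
  match n return nat -> mpolyR K n -> mpolyR K n with
  | 0 => fun _ p => p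
  | n'.+1 => fun i (p : {poly mpolyR K n'}) =>
      (if i == n' then 'X * p else map_poly (@xact K n' i) p : {poly mpolyR K n'})
  end.

(* y_i : x^a |-> x^a / x_i if a_i >= 1, and 0 otherwise *)
Fixpoint yact (K : comNzRingType) (n : nat) : nat -> mpolyR K n -> mpolyR K n :=
  match n return nat -> mpolyR K n -> mpolyR K n with
  | 0 => fun _ p => p
  | n'.+1 => fun i (p : {poly mpolyR K n'}) =>
      (if i == n' then \poly_(k < (size p).-1) p`_k.+1
       else map_poly (@yact K n' i) p : {poly mpolyR K n'})
  end.

(* Generators: inl i = x_i, inr i = y_i  (i : 'I_n).                  *)

Definition gen (n : nat) := ('I_n + 'I_n)%type.
Definition idx n (g : gen n) : 'I_n := match g with inl i => i | inr i => i end.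

Definition Pact (K : comNzRingType) n (g : gen n) : Pn K n -> Pn K n :=
  match g with inl i => @xact K n i | inr i => @yact K n i end.

(* elements of the free algebra K<x,y>: formal linear combinations of words;
   the word [:: g1; ...; gk] stands for the product g1 * ... * gk *)
Definition ncpoly (K : Type) n := seq (K * seq (gen n)).

Section SnDefs.
Variables (K : fieldType) (n : nat).

Definition coef (p : ncpoly K n) (w : seq (gen n)) : K :=
  \sum_(c <- p | c.2 == w) c.1.

Inductive relator : ncpoly K n -> Prop :=
| rel_inv (i : 'I_n) : relator [:: (1, [:: inr i; inl i]); (-1, [::])]
| rel_comm (g h : gen n) : idx g != idx h ->
    relator [:: (1, [:: g; h]); (-1, [:: h; g])].

(* the two-sided ideal of K<x,y> generated by the relators;
   p represents 0 in S_n iff in_I p *)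
Inductive in_I : ncpoly K n -> Prop :=
| I_rel p : relator p -> in_I p
| I_nil : in_I [::]
| I_add p q : in_I p -> in_I q -> in_I (p ++ q)
| I_scale (a : K) p : in_I p -> in_I [seq (a * c.1, c.2) | c <- p]
| I_lmul w p : in_I p -> in_I [seq (c.1, w ++ c.2) | c <- p]
| I_rmul w p : in_I p -> in_I [seq (c.1, c.2 ++ w) | c <- p]
| I_coef p q : in_I p -> (forall w, coef p w = coef q w) -> in_I q.

Section Modules.
Variable V : lmodType K.

Definition wact (act : gen n -> V -> V) (w : seq (gen n)) (v : V) : V :=
  foldr act v w.
Definition pact (act : gen n -> V -> V) (p : ncpoly K n) (v : V) : V :=
  \sum_(c <- p) c.1 *: wact act c.2 v.

Definition Smodule (act : gen n -> V -> V) : Prop :=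
  [/\ forall g a u v, act g (a *: u + v) = a *: act g u + act g v,
      forall (i : 'I_n) v, act (inr i) (act (inl i) v) = v &
      forall (g h : gen n), idx g != idx h ->
        forall v, act g (act h v) = act h (act g v)].

Definition submodule (act : gen n -> V -> V) (U : V -> Prop) : Prop :=
  [/\ U 0, forall a u v, U u -> U v -> U (a *: u + v) &
      forall g u, U u -> U (act g u)].

Definition simple_mod (act : gen n -> V -> V) : Prop :=
  (exists v : V, v != 0) /\
  forall U : V -> Prop, submodule act U ->
    (forall u, U u -> u = 0) \/ (forall v, U v).

Definition faithful (act : gen n -> V -> V) : Prop :=
  forall p : ncpoly K n, (forall v, pact act p v = 0) -> in_I p.
End Modules.

Definition Smod_iso (U V : lmodType K) (actU : gen n -> U -> U)
  (actV : gen n -> V -> V) : Prop :=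
  exists f : U -> V,
    [/\ bijective f, forall a u v, f (a *: u + v) = a *: f u + f v &
        forall g u, f (actU g u) = actV g (f u)].

(* Jacobson radical = intersection of annihilators of simple left modules *)
Definition jacobson_radical (p : ncpoly K n) : Prop :=
  forall (V : lmodType K) (act : gen n -> V -> V),
    Smodule act -> simple_mod act -> forall v, pact act p v = 0.

Definition jacobson_zero : Prop :=
  forall p : ncpoly K n, jacobson_radical p -> in_I p.

Definition primitive : Prop :=
  exists (V : lmodType K) (act : gen n -> V -> V),
    [/\ Smodule act, simple_mod act & faithful act].

End SnDefs.

(* Main.v *)
Require Import Defs.
From HB Require Import structures.
From mathcomp Require Import all_boot all_order all_algebra.
From Stdlib Require Import Classical ClassicalEpsilon.
Set Implicit Arguments. Unset Strict Implicit. Unset Printing Implicit Defensive.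
Import GRing.Theory.
Local Open Scope ring_scope.







Section PnFacts.
Variable K : fieldType.

Lemma xactS n i (p : {poly mpolyR K n}) :
  @xact K n.+1 i p = (if i == n then 'X * p else map_poly (@xact K n i) p : {poly _}).
Proof. by []. Qed.
Lemma yactS n i (p : {poly mpolyR K n}) :
  @yact K n.+1 i p = (if i == n then \poly_(k < (size p).-1) p`_k.+1
                   else map_poly (@yact K n i) p : {poly _}).
Proof. by []. Qed.

Lemma xact0 n i : @xact K n i 0 = 0 :> mpolyR K n.
Proof. by elim: n => [|n IH] //; rewrite xactS; case: eqP => _; rewrite ?mulr0 ?map_poly0. Qed.
Lemma yact0 n i : @yact K n i 0 = 0 :> mpolyR K n.
Proof.
elim: n => [|n IH] //; rewrite yactS; case: eqP => _; rewrite ?map_poly0 //.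
by apply/polyP => k; rewrite coef_poly coef0 nth_default ?if_same // polyseq0.
Qed.

Lemma coef_xtop n (p : {poly mpolyR K n}) k :
  (@xact K n.+1 n p : {poly _})`_k = if k == 0%N then 0 else p`_k.-1.
Proof. by rewrite xactS eqxx coefXM. Qed.
Lemma coef_xlow n i (p : {poly mpolyR K n}) k : i != n ->
  (@xact K n.+1 i p : {poly _})`_k = @xact K n i p`_k.
Proof. by move=> /negPf hi; rewrite xactS hi coef_map_id0 // xact0. Qed.
Lemma coef_ytop n (p : {poly mpolyR K n}) k :
  (@yact K n.+1 n p : {poly _})`_k = p`_k.+1.
Proof.
rewrite yactS eqxx coef_poly; case: ifP => // /negbT; rewrite -leqNgt => h.
by rewrite nth_default // (leq_trans (leqSpred _)) // ltnS.
Qed.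
Lemma coef_ylow n i (p : {poly mpolyR K n}) k : i != n ->
  (@yact K n.+1 i p : {poly _})`_k = @yact K n i p`_k.
Proof. by move=> /negPf hi; rewrite yactS hi coef_map_id0 // yact0. Qed.

End PnFacts.

Section P2.
Variable K : fieldType.
Lemma iconstS n (a : K) : iconst n.+1 a = (iconst n a)%:P :> {poly mpolyR K n}.
Proof. by []. Qed.
Lemma iconst0 n : iconst n (0 : K) = 0.
Proof. by elim: n => [|n IH] //; rewrite iconstS IH. Qed.

Lemma xact_lin n i a (u v : mpolyR K n) :
  @xact K n i (iconst n a * u + v) = iconst n a * @xact K n i u + @xact K n i v.
Proof.
elim: n => [|n IH] in u v *; first by [].
rewrite iconstS; apply/polyP => k.
have [->|hi] := eqVneq i n.
  by rewrite !(coefD, coef_xtop, coefCM); case: (k) => [|k'] /=; rewrite ?mulr0 ?addr0.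
by rewrite !(coefD, coef_xlow, coefCM) // IH.
Qed.

Lemma yact_lin n i a (u v : mpolyR K n) :
  @yact K n i (iconst n a * u + v) = iconst n a * @yact K n i u + @yact K n i v.
Proof.
elim: n => [|n IH] in u v *; first by [].
rewrite iconstS; apply/polyP => k.
have [->|hi] := eqVneq i n.
  by rewrite !(coefD, coef_ytop, coefCM).
by rewrite !(coefD, coef_ylow, coefCM) // IH.
Qed.

Lemma yx n i (u : mpolyR K n) : @yact K n i (@xact K n i u) = u.
Proof.
elim: n => [|n IH] in u *; first by [].
apply/polyP => k.
have [->|hi] := eqVneq i n; first by rewrite coef_ytop coef_xtop.
by rewrite !coef_ylow ?coef_xlow ?IH.
Qed.

Definition gA (b : bool) (n i : nat) : mpolyR K n -> mpolyR K n := if b then @yact K n i else @xact K n i.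
Arguments gA : clear implicits.

Lemma gA0 b n i : gA b n i 0 = 0.
Proof. by case: b; rewrite /gA ?xact0 ?yact0. Qed.

Lemma coef_gAlow b n i (p : {poly mpolyR K n}) k : i != n ->
  (gA b n.+1 i p : {poly _})`_k = gA b n i p`_k.
Proof. by case: b => hi; rewrite /gA ?coef_xlow ?coef_ylow. Qed.

Lemma coef_xtop0 n (p : {poly mpolyR K n}) :
  (@xact K n.+1 n p : {poly _})`_0 = 0.
Proof. by rewrite coef_xtop. Qed.
Lemma coef_xtopS n (p : {poly mpolyR K n}) k :
  (@xact K n.+1 n p : {poly _})`_k.+1 = p`_k.
Proof. by rewrite coef_xtop. Qed.

Lemma gA_comm n b1 b2 i j (u : mpolyR K n) : i != j ->
  gA b1 n i (gA b2 n j u) = gA b2 n j (gA b1 n i u).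
Proof.
elim: n => [|n IH] in b1 b2 u *; first by case: b1; case: b2.
move=> hij; apply/polyP => k.
have [ein|hi] := eqVneq i n.
  subst i; have hj : j != n by rewrite eq_sym.
  case: b1; case: b2; case: k => [|k]; rewrite /gA ?coef_ytop ?coef_xtop0 ?coef_xtopS ?(coef_ylow _ _ hj) ?(coef_xlow _ _ hj) ?coef_ytop ?coef_xtop0 ?coef_xtopS ?xact0 ?yact0 //.
have [ejn|hj] := eqVneq j n.
  subst j.
  case: b1; case: b2; case: k => [|k]; rewrite /gA ?coef_ytop ?coef_xtop0 ?coef_xtopS ?(coef_ylow _ _ hi) ?(coef_xlow _ _ hi) // ?coef_ytop ?coef_xtop0 ?coef_xtopS ?xact0 ?yact0 //.
by rewrite !coef_gAlow // IH.
Qed.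

End P2.

Section P3.
Variable K : fieldType.

Lemma iconstN1 n : iconst n (-1 : K) = -1.
Proof. by elim: n => [|n IH] //; rewrite iconstS IH polyCN. Qed.

Lemma span n (C : mpolyR K n -> Prop) : C 1 ->
  (forall a u v, C u -> C v -> C (iconst n a * u + v)) ->
  (forall i, (i < n)%N -> forall u, C u -> C (@xact K n i u)) -> forall p, C p.
Proof.
have C0 m (D : mpolyR K m -> Prop) : D 1 ->
    (forall a u v, D u -> D v -> D (iconst m a * u + v)) -> D 0.
  by move=> D1 Dl; have := Dl (-1) _ _ D1 D1; rewrite iconstN1 mulN1r addNr.
elim: n => [|n IH] in C *.
  move=> C1 Cl _ p; have := Cl p 1 0 C1 (C0 _ _ C1 Cl).
  by rewrite /= mulr1 addr0.
move=> C1 Cl Cx.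
have CX k : C ('X^k).
  elim: k => [|k IHk]; first by rewrite expr0.
  by rewrite exprS; have := Cx n (ltnSn n) _ IHk; rewrite xactS eqxx.
pose C' (q : mpolyR K n) := forall k, C (q%:P * 'X^k).
have C'all : forall q, C' q.
  apply: IH.
  - by move=> k; rewrite mul1r; apply: CX.
  - move=> a u v Cu Cv k; rewrite polyCD polyCM mulrDl -mulrA.
    by rewrite -iconstS; apply: Cl.
  - move=> i hi u Cu k.
    have -> : (@xact K n i u)%:P * 'X^k = @xact K n.+1 i (u%:P * 'X^k).
      apply/polyP => j; rewrite coef_xlow ?(ltn_eqF hi) // !coefMXn.
      by case: ifP => _; rewrite ?xact0 // !coefC; case: eqP => _; rewrite ?xact0.
    by apply: Cx; [apply: ltnW|].
move=> p; rewrite -[p]coefK poly_def.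
have C00 := C0 _ _ C1 Cl.
elim/big_ind: _ => //.
  by move=> u v Cu Cv; have := Cl 1 u v Cu Cv; rewrite iconst1 mul1r.
by move=> k _; rewrite -mul_polyC; apply: C'all.
Qed.

End P3.

Section P4.
Variable K : fieldType.

Lemma to_const n (p : mpolyR K n) : p != 0 ->
  exists js : seq nat, exists c : K,
    [/\ all (fun i => (i < n)%N) js, c != 0 &
        foldr (fun i q => @yact K n i q) p js = iconst n c].
Proof.
elim: n => [|n IH] in p *.
  by move=> hp; exists [::], p; split.
move=> hp.
pose d := (size (p : {poly mpolyR K n})).-1.
have Hit k j : (iter k (@yact K n.+1 n) p : {poly _})`_j = (p : {poly _})`_(j + k).
  elim: k j => [|k IHk] j; first by rewrite addn0.
  by rewrite iterS coef_ytop IHk addSnnS.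
have Hd : iter d (@yact K n.+1 n) p = (lead_coef (p : {poly _}))%:P.
  apply/polyP => j; rewrite Hit coefC lead_coefE; case: j => [|j] //=.
  rewrite nth_default // /d. rewrite addSn -addnS.
  by case: (size _) => [|s] //=; rewrite addnS ltnS leq_addl.
have hl : lead_coef (p : {poly mpolyR K n}) != 0 by rewrite lead_coef_eq0.
have [js [c [hjs hc hf]]] := IH _ hl.
exists (js ++ nseq d n), c; split => //.
  rewrite all_cat (sub_all _ hjs) /=; last by move=> i; apply: ltnW.
  by apply/allP => i /nseqP [-> _].
rewrite foldr_cat (_ : foldr _ p (nseq d n) = iter d (@yact K n.+1 n) p); last first.
  by elim: (d) => [|k IHk] //=; rewrite IHk.
rewrite Hd iconstS -hf.
elim: js hjs {hf} => [|i js IHjs] //= /andP [hi hjs].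
rewrite IHjs //; apply/polyP => j; rewrite coef_ylow ?(ltn_eqF hi) // !coefC.
by case: eqP => _; rewrite ?yact0.
Qed.

End P4.

Section P5.
Variables (K : fieldType) (n : nat).

Lemma Pn_Smodule : Smodule (@Pact K n).
Proof.
split.
- by case=> i a u v; rewrite /Pact; [apply: xact_lin | apply: yact_lin].
- by move=> i v; apply: yx.
- case=> i; case=> j /= hij v; have h : (i : nat) != j := hij.
  + exact: (@gA_comm K n false false i j v h).
  + exact: (@gA_comm K n false true i j v h).
  + exact: (@gA_comm K n true false i j v h).
  + exact: (@gA_comm K n true true i j v h).
Qed.

Lemma yact1 m i : (i < m)%N -> @yact K m i 1 = 0.
Proof.
elim: m => [|m IH] // hi; apply/polyP => k; rewrite coef0.
have [e|him] := eqVneq i m.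
  by rewrite e coef_ytop coef1.
rewrite coef_ylow // coef1; case: k => [|k] /=.
  by rewrite IH // ltn_neqAle him -ltnS.
by rewrite yact0.
Qed.

Lemma Pn_simple : simple_mod (@Pact K n).
Proof.
split; first by exists (1 : Pn K n); apply: oner_neq0.
move=> U [U0 Ul Ug].
case: (classic (exists u, U u /\ u != 0)) => [[u [Uu hu]]|hno]; last first.
  left=> u Uu; apply/eqP; apply: contraT => hu; exfalso; apply: hno; by exists u.
right.
have [js [c [hjs hc hf]]] := to_const hu.
have Uc : U (iconst n c : Pn K n).
  rewrite -hf; elim: js hjs {hf} => [|i js IHjs] //= /andP [hi hjs].
  exact: (Ug (inr (Ordinal hi)) _ (IHjs hjs)).
have U1 : U (1 : Pn K n).
  have := Ul c^-1 _ _ Uc U0; rewrite addr0.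
  have -> : c^-1 *: (iconst n c : Pn K n) = 1.
    change (iconst n c^-1 * iconst n c = 1 :> mpolyR K n).
    by rewrite -iconstM mulVf // iconst1.
  by [].
apply: (@span K n U U1).
  by move=> a u' v' Uu' Uv'; apply: Ul.
by move=> i hi u' Uu'; exact: (Ug (inl (Ordinal hi)) _ Uu').
Qed.

End P5.

Section Lin.
Variables (K : fieldType) (V : lmodType K).
Definition lin (f : V -> V) := forall a u v, f (a *: u + v) = a *: f u + f v.
Variable f : V -> V.
Hypothesis hf : lin f.
Lemma lin0 : f 0 = 0.
Proof.
have H := hf 1 0 0; rewrite !scale1r !addr0 in H.
by have := congr1 (fun x => x - f 0) H; rewrite subrr addrK => <-.
Qed.
Lemma linD u v : f (u + v) = f u + f v.
Proof. by have := hf 1 u v; rewrite !scale1r. Qed.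
Lemma linZ a u : f (a *: u) = a *: f u.
Proof. by have := hf a u 0; rewrite !addr0 lin0 addr0. Qed.
Lemma linN u : f (- u) = - f u.
Proof. by rewrite -scaleN1r linZ scaleN1r. Qed.
Lemma linB u v : f (u - v) = f u - f v.
Proof. by rewrite linD linN. Qed.
Lemma lin_sum I (r : seq I) (P : pred I) (F : I -> V) :
  f (\sum_(i <- r | P i) F i) = \sum_(i <- r | P i) f (F i).
Proof. exact: (big_morph f linD lin0). Qed.
End Lin.

Lemma lin_comp (K : fieldType) (V : lmodType K) (f g : V -> V) :
  lin f -> lin g -> lin (fun v => f (g v)).
Proof. by move=> hf hg a u v /=; rewrite hg hf. Qed.

Section Mod.
Variables (K : fieldType) (n : nat) (V : lmodType K) (act : gen n -> V -> V).
Hypothesis hS : Smodule act.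

Lemma act_lin g : lin (act g).
Proof. by case: hS => h _ _ a u v; apply: h. Qed.
Lemma yxE i v : act (inr i) (act (inl i) v) = v.
Proof. by case: hS => _ h _; apply: h. Qed.
Lemma commE g h v : idx g != idx h -> act g (act h v) = act h (act g v).
Proof. by case: hS => _ _ H /H; apply. Qed.

Lemma wact_cat u w v : wact act (u ++ w) v = wact act u (wact act w v).
Proof. by rewrite /wact foldr_cat. Qed.
Lemma wact_lin w : lin (wact act w).
Proof.
elim: w => [|g w IH] a u v //=.
by rewrite /wact /= -/(wact act w _) -/(wact act w _) -/(wact act w _) IH act_lin.
Qed.

Lemma wcomm g s v : (forall h, h \in s -> idx h != idx g) ->
  act g (wact act s v) = wact act s (act g v).
Proof.
elim: s => [|h s IH] hs //=.
rewrite /wact /= -!/(wact act s _) commE; last first.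
  by rewrite eq_sym; apply: hs; rewrite mem_head.
by rewrite IH // => h' hh'; apply: hs; rewrite in_cons hh' orbT.
Qed.

Lemma pact_cat p q v : pact act (p ++ q) v = pact act p v + pact act q v.
Proof. by rewrite /pact big_cat. Qed.
Lemma pact_scale a p v : pact act [seq (a * c.1, c.2) | c <- p] v = a *: pact act p v.
Proof.
rewrite /pact big_map scaler_sumr; apply: eq_bigr => c _ /=; by rewrite scalerA.
Qed.
Lemma pact_lmul w p v : pact act [seq (c.1, w ++ c.2) | c <- p] v = wact act w (pact act p v).
Proof.
rewrite /pact big_map (lin_sum (wact_lin w)); apply: eq_bigr => c _ /=.
by rewrite wact_cat linZ //; apply: wact_lin.
Qed.
Lemma pact_rmul w p v : pact act [seq (c.1, c.2 ++ w) | c <- p] v = pact act p (wact act w v).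
Proof. by rewrite /pact big_map; apply: eq_bigr => c _ /=; rewrite wact_cat. Qed.

End Mod.

Lemma sum_pick (M : nmodType) (key : eqType) (s : seq key) (k0 : key) (G : key -> M) :
  uniq s -> \sum_(k <- s) (if k == k0 then G k else 0) = if k0 \in s then G k0 else 0.
Proof.
move=> us; case: ifP => hk.
  rewrite (bigD1_seq k0) //= eqxx big1 ?addr0 // => k /negPf ->; done.
rewrite big1_seq // => k /andP [_ hks].
have hne : k != k0 by apply: contraFN hk => /eqP <-.
by rewrite (negPf hne).
Qed.

Lemma group_sum (M : nmodType) (T : eqType) (key : eqType) (h : T -> key) (F : T -> M)
  (p : seq T) (s : seq key) : uniq s -> (forall c, c \in p -> h c \in s) ->
  \sum_(c <- p) F c = \sum_(k <- s) \sum_(c <- p | h c == k) F c.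
Proof.
move=> us hs.
rewrite (eq_big_seq (fun c => \sum_(k <- s | h c == k) F c)); last first.
  move=> c hc /=; rewrite big_mkcond /=.
  rewrite (eq_bigr (fun k => if k == h c then F c else 0)); last by move=> k _; rewrite eq_sym.
  by rewrite sum_pick // hs.
rewrite (exchange_big_dep xpredT) //=.
Qed.

Section Mod2.
Variables (K : fieldType) (n : nat) (V : lmodType K) (act : gen n -> V -> V).
Hypothesis hS : Smodule act.

Lemma pact_group (key : eqType) (h : seq (gen n) -> key) (F : key -> V)
   (p : ncpoly K n) (s : seq key) : uniq s -> (forall c, c \in p -> h c.2 \in s) ->
  \sum_(c <- p) c.1 *: F (h c.2) = \sum_(k <- s) (\sum_(c <- p | h c.2 == k) c.1) *: F k.
Proof.
move=> us hs; rewrite (@group_sum _ _ _ (fun c : K * seq (gen n) => h c.2) _ _ s) //.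
apply: eq_bigr => k _; rewrite scaler_suml; apply: eq_bigr => c /eqP -> //.
Qed.

Lemma pact_coef (p q : ncpoly K n) v : (forall w, coef p w = coef q w) ->
  pact act p v = pact act q v.
Proof.
move=> hpq; set s := undup (map snd (p ++ q)).
have us : uniq s by apply: undup_uniq.
rewrite /pact (@pact_group _ id (fun w => wact act w v) p s) //; last first.
  by move=> c hc; rewrite mem_undup map_f // mem_cat hc.
rewrite (@pact_group _ id (fun w => wact act w v) q s) //; last first.
  by move=> c hc; rewrite mem_undup map_f // mem_cat hc orbT.
by apply: eq_bigr => w _; have := hpq w; rewrite /coef => ->.
Qed.

Lemma ideal_zero p : in_I p -> forall v, pact act p v = 0.
Proof.
elim=> {p} [p hr| |p q _ IH _ IH0|a p _ IH|w p _ IH|w p _ IH|p q _ IH hc] v.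
- case: hr => [i|g h hgh]; rewrite /pact !big_cons big_nil /= /wact /=.
    by rewrite yxE // scale1r scaleN1r addr0 subrr.
  by rewrite commE // scale1r scaleN1r addr0 subrr.
- by rewrite /pact big_nil.
- by rewrite pact_cat IH IH0 addr0.
- by rewrite pact_scale IH scaler0.
- by rewrite (pact_lmul hS) IH lin0 //; apply: wact_lin.
- by rewrite pact_rmul IH.
- by rewrite -(pact_coef _ hc) IH.
Qed.

End Mod2.

Section Syn.
Variables (K : fieldType) (n : nat).
Notation word := (seq (gen n)).

Lemma coef_nil w : coef ([::] : ncpoly K n) w = 0.
Proof. by rewrite /coef big_nil. Qed.
Lemma coef_cons (c : K * word) p w :
  coef (c :: p) w = (if c.2 == w then c.1 else 0) + coef p w.
Proof. by rewrite /coef big_cons; case: ifP; rewrite ?add0r. Qed.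
Lemma coef_cat (p q : ncpoly K n) w : coef (p ++ q) w = coef p w + coef q w.
Proof. by rewrite /coef big_cat. Qed.

Definition eqv (u w : word) := in_I [:: ((1 : K), u); (-1, w)].

Lemma eqv_refl u : eqv u u.
Proof.
rewrite /eqv; apply: (I_coef (@I_nil K n)) => z; rewrite !coef_cons !coef_nil /=.
by case: (u == z); rewrite ?addr0 ?subrr.
Qed.

Lemma eqv_sym u w : eqv u w -> eqv w u.
Proof.
move=> /(I_scale (-1)) /I_coef; apply => z; rewrite !coef_cons !coef_nil /=.
by rewrite mulrN1 mulN1r opprK !addr0 addrC.
Qed.

Lemma eqv_trans u v w : eqv u v -> eqv v w -> eqv u w.
Proof.
move=> h1 h2; apply: (I_coef (I_add h1 h2)) => z.
rewrite !coef_cons !coef_nil /= !addr0.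
by case: (v == z); rewrite ?addr0 ?add0r // addKr.
Qed.

Lemma eqv_ctx w1 w2 u w : eqv u w -> eqv (w1 ++ u ++ w2) (w1 ++ w ++ w2).
Proof.
move=> h; have := I_lmul w1 (I_rmul w2 h); rewrite /eqv /= !catA //.
Qed.

Lemma eqv_cons g u w : eqv u w -> eqv (g :: u) (g :: w).
Proof. by move=> /(eqv_ctx [:: g] [::]); rewrite !cats0. Qed.

Lemma eqv_yx i : eqv [:: inr i; inl i] [::].
Proof. by rewrite /eqv; apply: I_rel; apply: rel_inv. Qed.

Lemma eqv_swap g h : idx g != idx h -> eqv [:: g; h] [:: h; g].
Proof. by move=> hgh; rewrite /eqv; apply: I_rel; apply: rel_comm. Qed.

Lemma eqv_move g s w : (forall h, h \in s -> idx h != idx g) ->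
  eqv (g :: s ++ w) (s ++ g :: w).
Proof.
elim: s => [|h s IH] hs /=; first exact: eqv_refl.
apply: (@eqv_trans _ (h :: g :: s ++ w)).
  have := eqv_ctx [::] (s ++ w) (eqv_swap (_ : idx g != idx h)).
  by apply; rewrite eq_sym; apply: hs; rewrite mem_head.
apply: eqv_cons; apply: IH => h' hh'; apply: hs; by rewrite in_cons hh' orbT.
Qed.

End Syn.

Section NF.
Variables (n : nat).
Notation word := (seq (gen n)).
Notation fn := {ffun 'I_n -> nat}.

Definition setf (c : fn) (i : 'I_n) (k : nat) : fn := [ffun j => if j == i then k else c j].
Definition blkw (t : 'I_n -> gen n) (c : fn) : word :=
  flatten [seq nseq (c j) (t j) | j <- enum 'I_n].
Definition fzero : fn := [ffun => 0%N].

Lemma setf_id c i : setf c i (c i) = c.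
Proof. by apply/ffunP => j; rewrite ffunE; case: eqP => // ->. Qed.
Lemma setfE c i k j : setf c i k j = if j == i then k else c j.
Proof. by rewrite ffunE. Qed.
Lemma setf_setf c i k l : setf (setf c i k) i l = setf c i l.
Proof. by apply/ffunP => j; rewrite !ffunE; case: eqP. Qed.

Lemma blk_zero t : blkw t fzero = [::].
Proof. by rewrite /blkw; elim: (enum 'I_n) => //= j s ->; rewrite ffunE. Qed.

Lemma mem_blk t c g : g \in blkw t c -> exists2 j, g = t j & (0 < c j)%N.
Proof.
case/flattenP => s /mapP [j _ ->] /nseqP [-> hj]; by exists j.
Qed.

Lemma blk_split t (ht : forall j, idx (t j) = j) c i :
  exists X1, exists X2, (forall g, g \in X1 ++ X2 -> idx g != i) /\
    forall k, blkw t (setf c i k) = X1 ++ nseq k (t i) ++ X2.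
Proof.
rewrite /blkw; have hi := mem_enum 'I_n i; have u := enum_uniq 'I_n.
move: (enum 'I_n) hi u => e; case/splitPr => s1 s2.
rewrite cat_uniq /= => /and3P [_ h1 /andP [h2 _]].
have hs1 : i \notin s1 by apply: contra h1 => h; rewrite h.
exists (flatten [seq nseq (c j) (t j) | j <- s1]), (flatten [seq nseq (c j) (t j) | j <- s2]).
split.
  move=> g; rewrite mem_cat => /orP [] /flattenP [s /mapP [j hj ->] /nseqP [-> _]];
    rewrite ht; apply/eqP => ej; subst j; [by rewrite hj in hs1 | by rewrite hj in h2].
move=> k; rewrite map_cat flatten_cat /= setfE eqxx; congr (_ ++ _ ++ _).
  by congr flatten; apply/eq_in_map => j hj; rewrite setfE; case: eqP => // e'; rewrite -e' hj in hs1.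
by congr flatten; apply/eq_in_map => j hj; rewrite setfE; case: eqP => // e'; rewrite -e' hj in h2.
Qed.

End NF.

Section NF2.
Variables (K : fieldType) (n : nat).
Notation word := (seq (gen n)).
Notation fn := {ffun 'I_n -> nat}.
Definition xw (c : fn) : word := blkw (@inl 'I_n 'I_n) c.
Definition yw (c : fn) : word := blkw (@inr 'I_n 'I_n) c.
Definition mono := (fn * fn)%type.
Definition nw (m : mono) : word := xw m.1 ++ yw m.2.
Definition gmul (g : gen n) (m : mono) : mono :=
  match g with
  | inl i => (setf m.1 i (m.1 i).+1, m.2)
  | inr i => if (0 < m.1 i)%N then (setf m.1 i (m.1 i).-1, m.2)
             else (m.1, setf m.2 i (m.2 i).+1)
  end.
Definition nf (w : word) : mono := foldr gmul (fzero n, fzero n) w.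

Lemma eqv_gmul g m : eqv K (g :: nw m) (nw (gmul g m)).
Proof.
case: m => a b; case: g => i /=; rewrite /nw /=.
- have [X1 [X2 [hX hk]]] := @blk_split n (@inl 'I_n 'I_n) (fun j => erefl) a i.
  rewrite /xw -{1}(setf_id a i) !hk -!catA /=.
  apply: eqv_move => h hh; apply: hX; by rewrite mem_cat hh.
case: ifP => hai.
- have [X1 [X2 [hX hk]]] := @blk_split n (@inl 'I_n 'I_n) (fun j => erefl) a i.
  rewrite /xw -{1}(setf_id a i) !hk -!catA /=.
  case: (a i) hai => [|k] //= _.
  apply: (@eqv_trans _ _ _ (X1 ++ inr i :: inl i :: nseq k (inl i) ++ X2 ++ yw b)).
    apply: eqv_move => h hh; apply: hX; by rewrite mem_cat hh.
  have := eqv_ctx X1 (nseq k (inl i) ++ X2 ++ yw b) (eqv_yx K i).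
  by rewrite /=.
- have [Y1 [Y2 [hY hk]]] := @blk_split n (@inr 'I_n 'I_n) (fun j => erefl) b i.
  apply: (@eqv_trans _ _ _ (xw a ++ inr i :: yw b)).
    apply: eqv_move => h /mem_blk [j -> hj] /=.
    by apply: contraTneq hj => ->; rewrite hai.
  rewrite /yw -{1}(setf_id b i) !hk /=.
  have := eqv_ctx (xw a) [::] (@eqv_move K n (inr i) Y1 (nseq (b i) (inr i) ++ Y2) _).
  rewrite !cats0; apply => h hh; apply: hY; by rewrite mem_cat hh.
Qed.

Lemma eqv_nf w : eqv K w (nw (nf w)).
Proof.
elim: w => [|g w IH] /=.
  by rewrite /nw /xw /yw !blk_zero; apply: eqv_refl.
apply: eqv_trans (eqv_gmul g (nf w)).
exact: eqv_cons.
Qed.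

End NF2.

Section Mod3.
Variables (K : fieldType) (n : nat) (V : lmodType K) (act : gen n -> V -> V).
Hypothesis hS : Smodule act.
Notation word := (seq (gen n)).
Notation fn := {ffun 'I_n -> nat}.
Notation wa := (wact act).

Definition fle (c d : fn) := [forall j, c j <= d j]%N.
Definition fsub (c d : fn) : fn := [ffun j => c j - d j]%N.
Lemma fsubE (c d : fn) j : fsub c d j = (c j - d j)%N.
Proof. by rewrite ffunE. Qed.
Definition wt (c : fn) := (\sum_j c j)%N.

Lemma wt_setf (c : fn) (i : 'I_n) : (0 < c i)%N -> (wt (setf c i (c i).-1) < wt c)%N.
Proof.
move=> hc; rewrite /wt (bigD1 i) //= [X in (_ < X)%N](bigD1 i) //= setfE eqxx.
rewrite (eq_bigr (fun j => c j)); last by move=> j /negPf hj; rewrite setfE hj.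
by rewrite ltn_add2r prednK.
Qed.

Lemma wt_lt (b c : fn) : fle b c -> b != c -> (wt b < wt c)%N.
Proof.
move=> /forallP hle hne.
have [i hi] : exists i, b i != c i.
  apply/existsP; apply: contraNT hne => /existsPn h; apply/eqP/ffunP => j.
  by apply/eqP; have := h j; rewrite negbK.
have hlt : (b i < c i)%N by rewrite ltn_neqAle hi hle.
rewrite /wt (bigD1 i) //= [X in (_ < X)%N](bigD1 i) //=.
by rewrite -addSn leq_add // leq_sum // => j _; apply: hle.
Qed.

Lemma wcomm_nseq g k v : act g (wa (nseq k g) v) = wa (nseq k g) (act g v).
Proof. by elim: k => [|k IH] //=; rewrite -IH. Qed.

Lemma wact_blk_dec (t : 'I_n -> gen n) (ht : forall j, idx (t j) = j) (c : fn) (i : 'I_n) v :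
  (0 < c i)%N -> wa (blkw t c) v = act (t i) (wa (blkw t (setf c i (c i).-1)) v).
Proof.
move=> hc; have [X1 [X2 [hX hk]]] := blk_split ht c i.
rewrite -{1}(setf_id c i) !hk; case: (c i) hc => [|k] //= _.
rewrite !wact_cat.
have -> : wa (t i :: nseq k (t i) ++ X2) v = act (t i) (wa (nseq k (t i)) (wa X2 v)) by rewrite -wact_cat.
rewrite [RHS]wcomm ?wcomm_nseq // => h hh; rewrite ht; apply: hX; by rewrite mem_cat hh.
Qed.

Lemma fzeroP (c : fn) : c = fzero n \/ exists i, (0 < c i)%N.
Proof.
case: (pickP (fun j => 0 < c j)%N) => [i hi|h]; first by right; exists i.
left; apply/ffunP => j; rewrite ffunE; have := h j; by case: (c j).
Qed.

Variable u : V.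
Hypothesis hu : forall i, act (inr i) u = 0.

Lemma yx_blk (b : fn) (i : 'I_n) : act (inr i) (wa (xw b) u) =
  if (0 < b i)%N then wa (xw (setf b i (b i).-1)) u else 0.
Proof.
case: ifP => hb.
  by rewrite /xw (@wact_blk_dec (@inl _ _) (fun j => erefl) _ _ _ hb) (yxE hS).
rewrite wcomm ?hu ?lin0 //; first exact: wact_lin.
move=> h /mem_blk [j -> hj] /=; apply: contraTneq hj => ->; by rewrite hb.
Qed.

Lemma M1 (b' b : fn) : wa (yw b') (wa (xw b) u) =
  if fle b' b then wa (xw (fsub b b')) u else 0.
Proof.
move: {2}(wt b').+1 (ltnSn (wt b')) => N; elim: N b' => [|N IH] b' //.
case: (fzeroP b') => [->|[i hi]] hN.
  have -> : fle (fzero n) b by apply/forallP => j; rewrite ffunE.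
  have -> : fsub b (fzero n) = b by apply/ffunP => j; rewrite !ffunE subn0.
  by rewrite /yw blk_zero.
rewrite /yw (@wact_blk_dec (@inr _ _) (fun j => erefl) _ _ _ hi) -/(yw _).
have hw := wt_setf hi.
rewrite IH; last by apply: (leq_trans hw); rewrite -ltnS.
set b'' := setf b' i (b' i).-1.
have hle : fle b' b = fle b'' b && (b' i <= b i)%N.
  apply/forallP/andP => [h|[/forallP h hi']].
    split; last exact: h.
    apply/forallP => j; rewrite /b'' setfE; case: eqP => [->|_]; last exact: h.
    by rewrite (leq_trans (leq_pred _)).
  move=> j; have := h j; rewrite /b'' setfE; case: eqP => [->|] //.
case: ifP => h''; last by rewrite hle h'' /= (lin0 (act_lin hS _)).
rewrite yx_blk hle h'' /= fsubE /b'' setfE eqxx.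
have -> : (0 < b i - (b' i).-1)%N = (b' i <= b i)%N.
  by case: (b' i) hi => [|k] // _; rewrite subn_gt0.
case: ifP => // hb; congr (wa (xw _) u); apply/ffunP => j; rewrite setfE !fsubE.
case: eqP => [->|ne]; last by rewrite /b'' setfE (introF eqP ne).
by case: (b' i) hi => [|k] // _; rewrite subnS.
Qed.

Definition Eop (s : seq 'I_n) (v : V) : V :=
  foldr (fun i w => w - act (inl i) (act (inr i) w)) v s.

Lemma E1_lin i : lin (fun w => w - act (inl i) (act (inr i) w)).
Proof.
move=> a x y; rewrite !(linD (act_lin hS _)) !(linZ (act_lin hS _)).
by rewrite scalerBr opprD addrACA.
Qed.

Lemma Eop_lin s : lin (Eop s).
Proof.
elim: s => [|i s IH] a x y //=.
rewrite /Eop /= -!/(Eop _ _) IH; exact: E1_lin.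
Qed.

Lemma Eop_cons i s v : Eop (i :: s) v = Eop s v - act (inl i) (act (inr i) (Eop s v)).
Proof. by []. Qed.

Lemma Eop_comm g s v : (forall j, j \in s -> idx g != j) ->
  act g (Eop s v) = Eop s (act g v).
Proof.
elim: s => [|j s IH] hs //.
have hs' : forall j', j' \in s -> idx g != j'.
  by move=> j' hj'; apply: hs; rewrite in_cons hj' orbT.
have hj : idx g != j by apply: hs; rewrite mem_head.
by rewrite !Eop_cons (linB (act_lin hS _)) (commE hS (h := inl j)) // (commE hS (h := inr j)) // !(IH hs').
Qed.

Lemma Eop_x i s v : i \in s -> uniq s -> Eop s (act (inl i) v) = 0.
Proof.
elim: s => [|j s IH] //; rewrite in_cons => /orP [/eqP ->|his] /andP [hj us].
  rewrite Eop_cons -Eop_comm; last by move=> k hk /=; apply: contraNneq hj => ->.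
  by rewrite (yxE hS) // subrr.
by rewrite Eop_cons IH // (lin0 (act_lin hS _)) (lin0 (act_lin hS _)) subr0.
Qed.

Lemma Eop_y i s v : i \in s -> act (inr i) (Eop s v) = 0.
Proof.
elim: s => [|j s IH] //; rewrite in_cons => /orP [/eqP ->|his].
  by rewrite Eop_cons (linB (act_lin hS _)) (yxE hS) subrr.
have [eij|nij] := eqVneq i j; first by subst j; rewrite Eop_cons (linB (act_lin hS _)) (yxE hS) subrr.
rewrite Eop_cons (linB (act_lin hS _)) (commE hS (h := inl j)) // (commE hS (h := inr j)) //.
by rewrite IH // (lin0 (act_lin hS _)) (lin0 (act_lin hS _)) subr0.
Qed.

Lemma Eop_u s : Eop s u = u.
Proof. by elim: s => [|i s IH] //; rewrite Eop_cons IH hu (lin0 (act_lin hS _)) subr0. Qed.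

Definition EE := Eop (enum 'I_n).

Lemma M2 (c : fn) : EE (wa (xw c) u) = if c == fzero n then u else 0.
Proof.
case: (fzeroP c) => [->|[i hi]].
  by rewrite eqxx /xw blk_zero /EE Eop_u.
have -> : (c == fzero n) = false.
  by apply/negbTE; apply: contraTneq hi => ->; rewrite ffunE.
rewrite /xw (@wact_blk_dec (@inl _ _) (fun j => erefl) _ _ _ hi).
by rewrite /EE Eop_x ?mem_enum ?enum_uniq.
Qed.

Lemma EyX (a0 a : fn) : EE (wa (yw a0) (wa (xw a) u)) = if a == a0 then u else 0.
Proof.
rewrite M1; case: ifP => hle.
  rewrite M2; congr (if _ then _ else _).
  apply/eqP/eqP => [/ffunP h|->]; last by apply/ffunP => j; rewrite !ffunE subnn.
  apply/ffunP => j; have := h j; rewrite !ffunE => /eqP; rewrite subn_eq0 => h1.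
  by apply/eqP; rewrite eqn_leq h1; move/forallP: hle; apply.
rewrite /EE (lin0 (Eop_lin _)); case: eqP => // e; move: hle; rewrite e.
by have -> : fle a0 a0 by apply/forallP => j; apply: leqnn.
Qed.

End Mod3.

Section Syn2.
Variables (K : fieldType) (n : nat).
Definition Cp (p : ncpoly K n) (m : mono n) := \sum_(c <- p | nf c.2 == m) c.1.

Definition Dp (p : ncpoly K n) : ncpoly K n :=
  flatten [seq [:: (c.1, c.2); (- c.1, nw (nf c.2))] | c <- p].

Lemma Dp_in p : in_I (Dp p).
Proof.
rewrite /Dp; elim: p => [|c p IH] /=; first exact: I_nil.
apply: (@I_add K n [:: (c.1, c.2); (- c.1, nw (nf c.2))]); last exact: IH.
have := I_scale c.1 (eqv_nf K c.2); by rewrite /= mulr1 mulrN1.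
Qed.

Lemma coef_Dp p w :
  coef (Dp p) w = coef p w - \sum_(c <- p) (if nw (nf c.2) == w then c.1 else 0).
Proof.
rewrite /Dp; elim: p => [|c p IH] /=; first by rewrite !coef_nil big_nil subr0.
rewrite !coef_cons IH big_cons /=.
have -> : (if nw (nf c.2) == w then - c.1 else 0) = - (if nw (nf c.2) == w then c.1 else 0).
  by case: ifP; rewrite ?oppr0.
by rewrite ?addr0 opprD !addrA (addrAC _ (- _)).
Qed.

Lemma in_I_of_C p : (forall m, Cp p m = 0) -> in_I p.
Proof.
move=> hC; apply: (I_coef (Dp_in p)) => w; rewrite coef_Dp.
set s := undup [seq nf c.2 | c <- p].
rewrite (@group_sum _ _ _ (fun c : K * seq (gen n) => nf c.2) _ _ s); last first.
- by move=> c hc; rewrite mem_undup; apply: (map_f (fun c : K * seq (gen n) => nf c.2)).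
- exact: undup_uniq.
rewrite big1_seq ?subr0 // => m _.
rewrite (eq_bigr (fun c => if nw m == w then c.1 else 0)); last by move=> c /eqP ->.
case: (nw m == w); last by rewrite big1.
exact: hC.
Qed.


End Syn2.

Section Mod4.
Variables (K : fieldType) (n : nat) (V : lmodType K) (act : gen n -> V -> V).
Hypothesis hS : Smodule act.
Notation fn := {ffun 'I_n -> nat}.
Notation wa := (wact act).
Variable u : V.
Hypothesis hu : forall i, act (inr i) u = 0.

Lemma wact_nf w v : wa w v = wa (nw (nf w)) v.
Proof.
have := ideal_zero hS (eqv_nf K w) v.
rewrite /pact !big_cons big_nil /= scale1r scaleN1r addr0 => /eqP.
by rewrite subr_eq0 => /eqP.
Qed.

Lemma pact_nf (p : ncpoly K n) v : pact act p v =
  \sum_(m <- undup [seq nf c.2 | c <- p]) Cp p m *: wa (nw m) v.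
Proof.
rewrite /pact (eq_bigr (fun c => c.1 *: wa (nw (nf c.2)) v)); last first.
  by move=> c _; rewrite -wact_nf.
rewrite (@pact_group K n V _ (@nf n) (fun m => wa (nw m) v) p (undup [seq nf c.2 | c <- p])) //.
- exact: undup_uniq.
- by move=> c hc; rewrite mem_undup; apply: (map_f (fun c : K * seq (gen n) => nf c.2)).
Qed.

Lemma pick_zero (hu0 : u != 0) (p : ncpoly K n) (m0 : mono n) :
  \sum_(m <- undup [seq nf c.2 | c <- p]) (if m == m0 then Cp p m *: u else 0) = 0 ->
  Cp p m0 = 0.
Proof.
rewrite (@sum_pick _ _ _ m0 (fun m => Cp p m *: u)) ?undup_uniq //.
case: ifP => hin.
  by move/eqP; rewrite scaler_eq0 (negPf hu0) orbF => /eqP.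
move=> _; rewrite /Cp big1_seq // => c /andP [/eqP hc hcp].
move: hin; rewrite mem_undup -hc.
by rewrite (map_f (fun c : K * seq (gen n) => nf c.2)).
Qed.

Lemma EEyw_lin (a0 : fn) : lin (fun v => EE act (wa (yw a0) v)).
Proof. apply: lin_comp; [exact: Eop_lin | exact: wact_lin]. Qed.

Lemma faithful_of (hu0 : u != 0) : faithful act.
Proof.
move=> p hp; apply: in_I_of_C.
suff H : forall N (b : fn), (wt b < N)%N -> forall a, Cp p (a, b) = 0.
  by case=> a b; apply: (H _ b (ltnSn _)).
elim=> [|N IH] b // hb a0.
have := congr1 (fun v => EE act (wa (yw a0) v)) (hp (wa (xw b) u)).
rewrite /= (lin0 (EEyw_lin a0)) pact_nf (lin_sum (EEyw_lin a0)).
rewrite (eq_bigr (fun m => if m == (a0, b) then Cp p m *: u else 0)).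
  exact: pick_zero.
case=> a' b' _; rewrite (linZ (EEyw_lin a0)) /nw /= !wact_cat (M1 hS hu).
case: ifP => hle; last first.
  rewrite (lin0 (wact_lin hS _)) (lin0 (EEyw_lin a0)) scaler0.
  case: eqP => // [[_ eb]]; move: hle; rewrite eb.
  by have -> : fle b b by apply/forallP => j; apply: leqnn.
have [eb|hne] := eqVneq b' b.
  subst b'.
  have -> : fsub b b = fzero n by apply/ffunP => j; rewrite !ffunE subnn.
  rewrite /xw blk_zero -/(xw a') /= (EyX hS hu) xpair_eqE eqxx andbT.
  by case: ifP; rewrite ?scaler0.
rewrite IH ?scale0r; last by rewrite (leq_trans (wt_lt hle hne)).
by case: eqP => // [[_ eb]]; rewrite eb eqxx in hne.
Qed.

Lemma yw_u (b : fn) : wa (yw b) u = if b == fzero n then u else 0.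
Proof.
have := M1 hS hu b (fzero n); rewrite /xw blk_zero /= => ->.
case: (fzeroP b) => [->|[i hi]].
  rewrite eqxx; have -> : fle (fzero n) (fzero n) by apply/forallP => j.
  have -> : fsub (fzero n) (fzero n) = fzero n by apply/ffunP => j; rewrite !ffunE.
  by rewrite /xw blk_zero.
have -> : (b == fzero n) = false by apply/negbTE; apply: contraTneq hi => ->; rewrite ffunE.
have -> // : fle b (fzero n) = false.
by apply/negbTE/forallPn; exists i; rewrite ffunE -ltnNge.
Qed.

Lemma extract0 (hu0 : u != 0) (p : ncpoly K n) : pact act p u = 0 ->
  forall a, Cp p (a, fzero n) = 0.
Proof.
move=> hp a0.
have := congr1 (fun v => EE act (wa (yw a0) v)) hp.
rewrite /= (lin0 (EEyw_lin a0)) pact_nf (lin_sum (EEyw_lin a0)).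
rewrite (eq_bigr (fun m => if m == (a0, fzero n) then Cp p m *: u else 0)).
  exact: pick_zero.
case=> a' b' _; rewrite (linZ (EEyw_lin a0)) /nw /= !wact_cat yw_u.
case: ifP => hb; last first.
  rewrite (lin0 (wact_lin hS _)) (lin0 (EEyw_lin a0)) scaler0.
  by case: eqP => // [[_ eb]]; rewrite eb eqxx in hb.
rewrite (eqP hb) (EyX hS hu) xpair_eqE eqxx andbT.
by case: ifP; rewrite ?scaler0.
Qed.

End Mod4.

Section Final.
Variables (K : fieldType) (n : nat).
Notation P := (Pn K n).
Notation PA := (@Pact K n).

Lemma PA_y1 (i : 'I_n) : PA (inr i) (1 : P) = 0.
Proof. exact: (@yact1 K n i (ltn_ord i)). Qed.

Lemma P1_neq0 : (1 : P) != 0.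
Proof. exact: oner_neq0. Qed.

Lemma span_q (p : P) : exists q : ncpoly K n, pact PA q 1 = p.
Proof.
apply: (@span K n (fun p : mpolyR K n => exists q : ncpoly K n, pact PA q 1 = p)).
- exists [:: (1, [::])]; by rewrite /pact big_cons big_nil /= scale1r addr0.
- move=> a x y [qx hx] [qy hy]; exists ([seq (a * c.1, c.2) | c <- qx] ++ qy).
  by rewrite pact_cat pact_scale hx hy.
- move=> i hi x [q hq]; exists [seq (c.1, [:: inl (Ordinal hi)] ++ c.2) | c <- q].
  by rewrite (pact_lmul (@Pn_Smodule K n)) hq.
Qed.

Fixpoint pE (s : seq 'I_n) : ncpoly K n :=
  if s is i :: s' then pE s' ++ [seq (- c.1, inl i :: inr i :: c.2) | c <- pE s']
  else [:: (1, [::])].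

Lemma pact_pE (V : lmodType K) (act : gen n -> V -> V) (hS : Smodule act) s v :
  pact act (pE s) v = Eop act s v.
Proof.
elim: s => [|i s IH]; first by rewrite /pact big_cons big_nil /= scale1r addr0.
rewrite (_ : pE (i :: s) = pE s ++ [seq (- c.1, inl i :: inr i :: c.2) | c <- pE s]) //.
rewrite pact_cat IH Eop_cons; congr (_ + _).
rewrite /pact big_map /= -IH /pact.
rewrite (lin_sum (lin_comp (act_lin hS (inl i)) (act_lin hS (inr i)))) -sumrN.
apply: eq_bigr => c _; rewrite /wact /= -/(wact act c.2 v).
by rewrite scaleNr (linZ (act_lin hS _)) (linZ (act_lin hS _)).
Qed.

Lemma uniqueness (V : lmodType K) (act : gen n -> V -> V) :
  Smodule act -> simple_mod act -> faithful act -> Smod_iso PA act.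
Proof.
move=> hS [_ hsimp] hfaith.
have [v hv] : exists v, EE act v != 0.
  apply: NNPP => hno.
  have hz : forall v, pact act (pE (enum 'I_n)) v = 0.
    move=> v; rewrite (pact_pE hS); apply/eqP; apply: contraT => h.
    by exfalso; apply: hno; exists v.
  have := ideal_zero (@Pn_Smodule K n) (hfaith _ hz) 1.
  rewrite (pact_pE (@Pn_Smodule K n)) (Eop_u (@Pn_Smodule K n) PA_y1) => h1.
  by move: P1_neq0; rewrite h1 eqxx.
set u := EE act v.
have hu : forall i, act (inr i) u = 0.
  by move=> i; apply: (Eop_y hS); rewrite mem_enum.
have hu0 : u != 0 by [].
have tr : forall r, pact PA r 1 = 0 -> pact act r u = 0.
  move=> r hr; have hC := extract0 (@Pn_Smodule K n) PA_y1 P1_neq0 hr.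
  rewrite (pact_nf hS) big1_seq // => [[a b]] _ /=.
  rewrite /nw wact_cat (yw_u hS hu) /=; case: eqP => [->|_].
    by rewrite hC scale0r.
  by rewrite (lin0 (wact_lin hS _)) scaler0.
have wd : forall q q', pact PA q 1 = pact PA q' 1 -> pact act q u = pact act q' u.
  move=> q q' hq; apply/eqP; rewrite -subr_eq0; apply/eqP.
  have := tr (q ++ [seq (-1 * c.1, c.2) | c <- q']).
  rewrite !pact_cat !pact_scale !scaleN1r hq subrr; by apply.
pose qof (p : P) := proj1_sig (constructive_indefinite_description _ (span_q p)).
have qofE p : pact PA (qof p) 1 = p.
  by rewrite /qof; case: constructive_indefinite_description.
pose f (p : P) := pact act (qof p) u.
have fE : forall q, f (pact PA q 1) = pact act q u.
  by move=> q; apply: wd; rewrite qofE.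
have flin : forall a x y, f (a *: x + y) = a *: f x + f y.
  move=> a x y; rewrite -{1}(qofE x) -{1}(qofE y).
  rewrite -pact_scale -pact_cat fE pact_cat pact_scale //.
have fact : forall g x, f (PA g x) = act g (f x).
  move=> g x; rewrite -{1}(qofE x).
  have -> : PA g (pact PA (qof x) 1) = pact PA [seq (c.1, [:: g] ++ c.2) | c <- qof x] 1.
    by rewrite (pact_lmul (@Pn_Smodule K n)).
  by rewrite fE (pact_lmul hS).
have f0 : f 0 = 0.
  have := fE [::]; rewrite /pact !big_nil; by apply.
have f1 : f 1 = u.
  have := fE [:: (1, [::])]; rewrite /pact !big_cons !big_nil /= !scale1r !addr0; by apply.
have finj : injective f.
  have ker : forall x, f x = 0 -> x = 0.
    have hsub : submodule PA (fun x => f x = 0).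
      split => //.
        by move=> a x y hx hy; rewrite flin hx hy scaler0 addr0.
      by move=> g x hx; rewrite fact hx (lin0 (act_lin hS _)).
    have [hz|hall] := (@Pn_simple K n).2 _ hsub.
      by apply: hz.
    by move: hu0; rewrite -f1 hall eqxx.
  move=> x y hxy; apply/eqP; rewrite -subr_eq0; apply/eqP; apply: ker.
  by rewrite -scaleN1r addrC flin hxy scaleN1r addNr.
have fsurj : forall w, exists x, f x = w.
  have hsub : submodule act (fun w => exists x, f x = w).
    split.
    - by exists 0.
    - by move=> a w1 w2 [x1 <-] [x2 <-]; exists (a *: x1 + x2); rewrite flin.
    - by move=> g w [x <-]; exists (PA g x); rewrite fact.
  case: (hsimp _ hsub) => // hz.
  by move: hu0; have := hz u; rewrite -f1 => ->; [rewrite eqxx | exists 1].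
pose g (w : V) := proj1_sig (constructive_indefinite_description _ (fsurj w)).
have fg w : f (g w) = w by rewrite /g; case: constructive_indefinite_description.
exists f; split => //.
by exists g => [x|w]; [apply: finj; rewrite fg | apply: fg].
Qed.

End Final.

Theorem corollary3p3 (K : fieldType) (n : nat) :
  (* P_n is a faithful simple S_n-module ... *)
  [/\ Smodule (@Pact K n), simple_mod (@Pact K n) & faithful (@Pact K n)] /\
  (* ... and up to isomorphism the only one *)
  (forall (V : lmodType K) (act : gen n -> V -> V),
      Smodule act -> simple_mod act -> faithful act ->
      Smod_iso (@Pact K n) act) /\
  (* consequently J(S_n) = 0 and S_n is primitive *)
  jacobson_zero K n /\ primitive K n.
Proof.
have hS := @Pn_Smodule K n.
have hs := @Pn_simple K n.
have hf : faithful (@Pact K n) := faithful_of hS (@PA_y1 K n) (@P1_neq0 K n).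
split; first by split.
split; first by move=> V act; apply: uniqueness.
split.
- move=> p hp; apply: hf => v; exact: hp _ _ hS hs v.
- by exists (Pn K n), (@Pact K n).
Qed.
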